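(* Let $\mathcal{H}$ be a complex Hilbert space, $A\in\mathcal{B}(\mathcal{H})$ positive and $S\in\mathcal{B}_A(\mathcal{H})$. For $a,b,c\in\mathcal{H}$ define $$\delta(a,b,c)=\begin{cases}\dfrac{\|b\|_A}{\|a\|_A}\left(|\langle a,c\rangle_A|\inf_{\lambda\in\mathbb{C}}\|c-\lambda b\|_A-\dfrac12\inf_{\mu\in\mathbb{C}}\|a-\mu b\|_A\right)^2 & \text{if } \|a\|_A\|b\|_A\neq 0,\\[2mm] 0 & \text{if } \|a\|_A\|b\|_A=0.\end{cases}$$ Then $$d\omega_A^2(S)\le \omega_A^2\left(S^{\sharp_A}S+S\right)+\omega_A\left(S^{\sharp_A}S^2\right)+\frac12\left\|\left(S^{\sharp_A}S\right)^2+S^{\sharp_A}S\right\|_A-2\inf_{\|z\|_A=1}\delta\left(S^{\sharp_A}Sz,\,Sz,\,z\right).$$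
   Context: $\mathcal{B}(\mathcal{H})$ denotes the bounded linear operators on $\mathcal{H}$. For positive $A$, $\langle x,z\rangle_A=\langle Ax,z\rangle$ and $\|z\|_A=\|A^{1/2}z\|$. $\mathcal{B}_A(\mathcal{H})$ is the set of $S\in\mathcal{B}(\mathcal{H})$ for which some $R\in\mathcal{B}(\mathcal{H})$ satisfies $AR=S^*A$; for such $S$, $S^{\sharp_A}=A^{\dagger}S^*A$ with $A^\dagger$ the Moore–Penrose inverse of $A$. For operators $T$ bounded with respect to $\|\cdot\|_A$: $\|T\|_A=\sup_{\|z\|_A=1}\|Tz\|_A$, $\omega_A(T)=\sup_{\|z\|_A=1}|\langle Tz,z\rangle_A|$, and $d\omega_A(T)=\sup_{\|z\|_A=1}(|\langle Tz,z\rangle_A|^2+\|Tz\|_A^4)^{1/2}$. *)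

(* Defs.v *)
From HB Require Import structures.
From mathcomp Require Import all_boot all_order all_algebra.
From mathcomp Require Import complex.
From mathcomp Require Import all_classical all_reals.
Set Implicit Arguments. Unset Strict Implicit. Unset Printing Implicit Defensive.
Import Order.TTheory GRing.Theory Num.Theory.
Local Open Scope ring_scope.
Local Open Scope classical_set_scope.

Section ASemiHilbert.
Variables (R : realType) (H : lmodType R[i]).
Implicit Types (ip : H -> H -> R[i]) (T A : H -> H).

Definition cabs (x : R[i]) : R :=
  Num.sqrt (complex.Re x ^+ 2 + complex.Im x ^+ 2).

Definition is_inner_product ip : Prop :=
  [/\ forall (a : R[i]) (x y z : H), ip (a *: x + y) z = a * ip x z + ip y z,
      forall x y : H, ip y x = (ip x y)^*,
      forall x : H, 0 <= ip x x
    & forall x : H, ip x x = 0 -> x = 0].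

Definition hnorm ip (x : H) : R := Num.sqrt (complex.Re (ip x x)).

Definition hcomplete ip : Prop :=
  forall u : nat -> H,
    (forall e : R, 0 < e -> exists N : nat, forall m n : nat,
        (N <= m)%N -> (N <= n)%N -> hnorm ip (u m - u n) < e) ->
    exists l : H, forall e : R, 0 < e -> exists N : nat, forall n : nat,
        (N <= n)%N -> hnorm ip (u n - l) < e.

Definition is_hilbert ip : Prop := is_inner_product ip /\ hcomplete ip.

Definition bounded_op ip T : Prop :=
  (forall (a : R[i]) (x y : H), T (a *: x + y) = a *: T x + T y) /\
  exists M : R, forall x : H, hnorm ip (T x) <= M * hnorm ip x.

Definition is_adjoint ip T Ts : Prop := forall x y : H, ip (T x) y = ip x (Ts y).

Definition positive_op ip A : Prop := forall x : H, 0 <= ip (A x) x.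

(* x = A^dagger y for y in the range of A: the Moore-Penrose inverse of A,
   restricted to R(A), maps y to the unique x in N(A)^perp with A x = y. *)
Definition mp_inverse_on_range ip A (y x : H) : Prop :=
  A x = y /\ forall w : H, A w = 0 -> ip x w = 0.

(* S in B_A(H), given its adjoint Ss = S^* : exists R in B(H) with A R = S^* A *)
Definition in_BA ip A (Ss : H -> H) : Prop :=
  exists Rop : H -> H, bounded_op ip Rop /\ forall x : H, A (Rop x) = Ss (A x).

(* Ssh = S^{#_A} = A^dagger S^* A (S^* A takes values in R(A) when S in B_A(H)) *)
Definition is_A_adjoint ip A (Ss Ssh : H -> H) : Prop :=
  forall z : H, mp_inverse_on_range ip A (Ss (A z)) (Ssh z).

Definition ipA ip A (x z : H) : R[i] := ip (A x) z.
Definition normA ip A (z : H) : R := Num.sqrt (complex.Re (ip (A z) z)).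

Definition unitA ip A : set H := [set z | normA ip A z = 1].

Definition opnormA ip A T : R :=
  sup [set normA ip A (T z) | z in unitA ip A].
Definition omegaA ip A T : R :=
  sup [set cabs (ipA ip A (T z) z) | z in unitA ip A].
Definition domegaA ip A T : R :=
  sup [set Num.sqrt (cabs (ipA ip A (T z) z) ^+ 2 + normA ip A (T z) ^+ 4)
      | z in unitA ip A].

Definition deltaA ip A (a b c : H) : R :=
  if normA ip A a * normA ip A b != 0 then
    normA ip A b / normA ip A a *
    (cabs (ipA ip A a c) * inf [set normA ip A (c - l *: b) | l in [set: R[i]]]
     - 2^-1 * inf [set normA ip A (a - m *: b) | m in [set: R[i]]]) ^+ 2
  else 0.

End ASemiHilbert.

(* Main.v *)
Require Import Defs.
From HB Require Import structures.
From mathcomp Require Import all_boot all_order all_algebra.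
From mathcomp Require Import complex.
From mathcomp Require Import all_classical all_reals.
From mathcomp Require Import ring lra.
Import Order.TTheory GRing.Theory Num.Theory.
Local Open Scope ring_scope.
Local Open Scope classical_set_scope.
Set Implicit Arguments. Unset Strict Implicit. Unset Printing Implicit Defensive.

Section Cplx.
Variable R : realType.
Local Notation CR := (real_complex R).

Lemma ReD (x y : R[i]) : complex.Re (x + y) = complex.Re x + complex.Re y.
Proof. by case: x; case: y. Qed.
Lemma ImD (x y : R[i]) : complex.Im (x + y) = complex.Im x + complex.Im y.
Proof. by case: x; case: y. Qed.
Lemma ReR (r : R) : complex.Re (CR r) = r. Proof. by []. Qed.
Lemma ImR (r : R) : complex.Im (CR r) = 0. Proof. by []. Qed.
Lemma ReJ (x : R[i]) : complex.Re (x^*) = complex.Re x. Proof. by case: x. Qed.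
Lemma ge0_CR (c : R[i]) : 0 <= c -> c = CR (complex.Re c).
Proof. case: c => a b; rewrite lecE /= => /andP[/eqP hb _]. by rewrite hb. Qed.
Lemma conjR (r : R) : (CR r)^* = CR r.
Proof. apply/eqP; rewrite eq_complex /= oppr0 !eqxx. done. Qed.
Lemma conj_i : ('i%C : R[i])^* = - 'i%C.
Proof. by apply/eqP; rewrite eq_complex /= oppr0 !eqxx. Qed.
Lemma i_neq0 : ('i%C : R[i]) != 0.
Proof. by rewrite eq_complex /= oner_eq0 andbF. Qed.

Lemma cabsE (c : R[i]) : CR (cabs c) = `|c|.
Proof. rewrite normc_def. done. Qed.
Lemma cabs_ge0 (c : R[i]) : 0 <= cabs c. Proof. by rewrite /cabs sqrtr_ge0. Qed.
Lemma cabsM (a b : R[i]) : cabs (a * b) = cabs a * cabs b.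
Proof. by apply: complexI; rewrite rmorphM /= !cabsE normrM. Qed.
Lemma cabs_sq (c : R[i]) : CR (cabs c ^+ 2) = c * c^*.
Proof. by rewrite rmorphXn /= cabsE normCK. Qed.
Lemma cabs_sqRI (c : R[i]) : cabs c ^+ 2 = complex.Re c ^+ 2 + complex.Im c ^+ 2.
Proof. by rewrite sqr_sqrtr // addr_ge0 // sqr_ge0. Qed.
Lemma cabsD (a b : R[i]) : cabs (a + b) <= cabs a + cabs b.
Proof. by rewrite -lecR rmorphD /= !cabsE ler_normD. Qed.
Lemma cabsR (r : R) : cabs (CR r) = `|r|.
Proof. by rewrite /cabs /= expr0n /= addr0 sqrtr_sqr. Qed.
Lemma cabsJ (c : R[i]) : cabs (c^*) = cabs c.
Proof. by case: c => a b; rewrite /cabs /= sqrrN. Qed.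
Lemma cabs_Re (c : R[i]) : `|complex.Re c| <= cabs c.
Proof.
have h := cabs_sqRI c. have h0 := cabs_ge0 c.
rewrite -(ger0_norm h0) -ler_sqr ?nnegrE // ?normr_ge0 //.
by rewrite !real_normK ?num_real // h lerDl sqr_ge0.
Qed.
Lemma sq_le (a b : R) : 0 <= a -> 0 <= b -> a ^+ 2 <= b ^+ 2 -> a <= b.
Proof. by move=> ha hb; rewrite (ler_pXn2r (_ : (0 < 2)%N)) ?nnegrE. Qed.
Lemma sq_mono (a b : R) : 0 <= a -> a <= b -> a ^+ 2 <= b ^+ 2.
Proof. move=> ha hab; nra. Qed.
Lemma cabs2 : cabs (2 : R[i]) = 2.
Proof. by rewrite -(rmorph_nat (real_complex R)) /= cabsR ger0_norm. Qed.
Lemma Re_ge0 (c : R[i]) : 0 <= c -> 0 <= complex.Re c.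
Proof. by case: c => a b; rewrite lecE => /andP[_ h]. Qed.
End Cplx.

Section Form.
Variables (R : realType) (H : lmodType R[i]) (f : H -> H -> R[i]).
Hypothesis fL : forall a x y z, f (a *: x + y) z = a * f x z + f y z.
Hypothesis fC : forall x y, f y x = (f x y)^*.
Hypothesis fP : forall x, 0 <= f x x.
Local Notation CR := (real_complex R).

Definition nf (x : H) : R := Num.sqrt (complex.Re (f x x)).

Lemma fD x y z : f (x + y) z = f x z + f y z.
Proof. by have := fL 1 x y z; rewrite scale1r mul1r. Qed.
Lemma f0l z : f 0 z = 0.
Proof.
have h := fD 0 0 z; rewrite addr0 in h.
by apply: (addrI (f 0 z)); rewrite addr0 -h.
Qed.
Lemma fZ a x z : f (a *: x) z = a * f x z.
Proof. by have := fL a x 0 z; rewrite !addr0 f0l addr0. Qed.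
Lemma fN x z : f (- x) z = - f x z.
Proof. by rewrite -scaleN1r fZ mulN1r. Qed.
Lemma fB x y z : f (x - y) z = f x z - f y z.
Proof. by rewrite fD fN. Qed.
Lemma fDr z x y : f z (x + y) = f z x + f z y.
Proof. by rewrite [LHS]fC fD rmorphD /= -!fC. Qed.
Lemma fZr z a x : f z (a *: x) = a^* * f z x.
Proof. by rewrite [LHS]fC fZ rmorphM /= -fC. Qed.
Lemma fNr z x : f z (- x) = - f z x.
Proof. by rewrite [LHS]fC fN rmorphN /= -fC. Qed.
Lemma fBr z x y : f z (x - y) = f z x - f z y.
Proof. by rewrite fDr fNr. Qed.

Lemma nf_ge0 x : 0 <= nf x. Proof. exact: sqrtr_ge0. Qed.
Lemma fvv x : f x x = CR (nf x ^+ 2).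
Proof. by rewrite /nf sqr_sqrtr ?Re_ge0 // -ge0_CR. Qed.
Lemma Refvv x : complex.Re (f x x) = nf x ^+ 2.
Proof. by rewrite [in LHS]fvv. Qed.
Lemma nf_eq x r : 0 <= r -> complex.Re (f x x) = r ^+ 2 -> nf x = r.
Proof. by move=> r0 h; rewrite /nf h sqrtr_sqr ger0_norm. Qed.
Lemma nfN x : nf (- x) = nf x.
Proof. by rewrite /nf fN fNr opprK. Qed.

Lemma fexp x y t : f (x - t *: y) (x - t *: y) =
  f x x - t^* * f x y - t * (f x y)^* + t * t^* * f y y.
Proof. rewrite fB !fBr !fZ !fZr [f y x]fC; ring. Qed.

Lemma CS x y : cabs (f x y) <= nf x * nf y.
Proof.
have hexp : forall t, 0 <= f x x - t^* * f x y - t * (f x y)^* + t * t^* * f y y.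
  by move=> t; rewrite -fexp.
rewrite !fvv in hexp.
have hx := nf_ge0 x; have hy := nf_ge0 y.
suff: cabs (f x y) ^+ 2 <= nf x ^+ 2 * nf y ^+ 2.
  by move=> h; apply: sq_le; rewrite ?cabs_ge0 ?mulr_ge0 // exprMn.
rewrite cabs_sqRI.
move: (f x y) hexp => [a b] hexp /=.
have [hQ|hQ] := eqVneq (nf y) 0.
- rewrite hQ expr0n /= mulr0.
  have hK : 0 <= a ^+ 2 + b ^+ 2 by rewrite addr_ge0 // sqr_ge0.
  rewrite le_eqVlt in hK; case/orP: hK => [/eqP <- //|hK].
  pose s := (nf x ^+ 2 + 1) / (2 * (a ^+ 2 + b ^+ 2)).
  have := hexp (Complex a b * CR s).
  rewrite lecE /= hQ => /andP[_ h].
  have hs : s * (2 * (a ^+ 2 + b ^+ 2)) = nf x ^+ 2 + 1.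
    by rewrite /s divfK // mulf_neq0 // ?pnatr_eq0 // gt_eqF.
  exfalso. move: h hs. rewrite expr0n /=. nra.
- have hQ0 : 0 < nf y ^+ 2 by rewrite exprn_gt0 // lt_def hQ hy.
  have := hexp (Complex a b * CR ((nf y ^+ 2)^-1)).
  rewrite lecE /= => /andP[_ h].
  have h2 : 0 <= nf x ^+ 2 - (nf y ^+ 2)^-1 * (a ^+ 2 + b ^+ 2).
    apply: (le_trans h); rewrite le_eqVlt; apply/orP; left; apply/eqP.
    by field.
  have := mulr_ge0 (ltW hQ0) h2.
  rewrite mulrBr mulVKf ?gt_eqF //. lra.
Qed.

Lemma nf2D x y : nf (x + y) ^+ 2 = nf x ^+ 2 + nf y ^+ 2 + 2 * complex.Re (f x y).
Proof.
rewrite -!Refvv fD !fDr [f y x]fC !ReD ReJ; ring.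
Qed.

Lemma nf_tri x y : nf (x + y) <= nf x + nf y.
Proof.
apply: sq_le; rewrite ?addr_ge0 ?nf_ge0 //.
rewrite nf2D.
have h1 := cabs_Re (f x y). have h2 := CS x y.
have h3 : complex.Re (f x y) <= `|complex.Re (f x y)| by exact: ler_norm.
nra.
Qed.

Lemma nf_subtri x y : nf (x - y) <= nf x + nf y.
Proof. by rewrite -(nfN y); apply: nf_tri. Qed.

Lemma nfZ a x : nf (a *: x) = cabs a * nf x.
Proof.
apply: nf_eq; first by rewrite mulr_ge0 ?cabs_ge0 ?nf_ge0.
rewrite fZ fZr mulrA -cabs_sq fvv -rmorphM /= exprMn //.
Qed.

Lemma fee1 e : nf e = 1 -> f e e = 1.
Proof. by move=> he; rewrite fvv he expr1n rmorph1. Qed.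

Definition proj x v := v - (f v x / f x x) *: x.

Lemma fxx_neq0 x : nf x != 0 -> f x x != 0.
Proof.
move=> hx; rewrite fvv; apply/eqP => /(congr1 (@complex.Re R)) /= /eqP.
by rewrite sqrf_eq0 (negbTE hx).
Qed.

Lemma proj_orth x v : nf x != 0 -> f (proj x v) x = 0.
Proof. by move=> hx; rewrite /proj fB fZ divfK ?subrr // fxx_neq0. Qed.

Lemma proj_add x u v : proj x (u + v) = proj x u + proj x v.
Proof. by rewrite /proj fD mulrDl scalerDl opprD addrACA. Qed.

Lemma proj_scale x k u : proj x (k *: u) = k *: proj x u.
Proof. by rewrite /proj fZ -mulrA -scalerA scalerBr. Qed.

Lemma proj_min x v l : nf x != 0 -> nf (proj x v) <= nf (v - l *: x).
Proof.
move=> hx.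
have -> : v - l *: x = proj x v + (f v x / f x x - l) *: x.
  by rewrite /proj scalerBl addrA subrK.
apply: sq_le; rewrite ?nf_ge0 //.
rewrite nf2D fZr proj_orth // mulr0 /= mulr0 addr0 lerDl.
exact: sqr_ge0.
Qed.

Lemma dist_inf x v : nf x != 0 ->
  inf [set nf (v - l *: x) | l in [set: R[i]]] = nf (proj x v).
Proof.
move=> hx; apply/eqP; rewrite eq_le; apply/andP; split.
- have : lbound [set nf (v - l *: x) | l in [set: R[i]]] (inf [set nf (v - l *: x) | l in [set: R[i]]]).
    apply: ge_inf; exists 0 => r [l _ <-]; exact: nf_ge0.
  by apply; exists (f v x / f x x).
- apply: lb_le_inf; first by exists (nf (v - 0 *: x)), 0.
  by move=> r [l _ <-]; exact: proj_min.
Qed.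

Lemma proj_nf2 x v : nf x != 0 ->
  nf (proj x v) ^+ 2 * nf x ^+ 2 = nf v ^+ 2 * nf x ^+ 2 - cabs (f v x) ^+ 2.
Proof.
move=> hx.
have e : f (proj x v) (proj x v) * f x x = f v v * f x x - f v x * (f v x)^*.
  have ho := proj_orth v hx.
  rewrite {2}/proj fBr fZr ho mulr0 subr0 /proj fB fZ [f x v]fC.
  by field; rewrite fxx_neq0.
rewrite !fvv -cabs_sq in e.
have := congr1 (@complex.Re R) e; rewrite /= ?mulr0 ?mul0r ?subr0. lra.
Qed.

Definition deltaf a b c : R :=
  if nf a * nf b != 0 then
    nf b / nf a *
    (cabs (f a c) * inf [set nf (c - l *: b) | l in [set: R[i]]]
     - 2^-1 * inf [set nf (a - m *: b) | m in [set: R[i]]]) ^+ 2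
  else 0.

Lemma deltaf_ge0 a b c : 0 <= deltaf a b c.
Proof.
rewrite /deltaf; case: ifP => // _.
by rewrite mulr_ge0 ?divr_ge0 ?nf_ge0 ?sqr_ge0.
Qed.

Lemma buzano x y e : nf e = 1 ->
  2 * cabs (f x e) * cabs (f y e) + 2 * deltaf y x e <= cabs (f x y) + nf x * nf y.
Proof.
move=> he.
have hX := nf_ge0 x; have hY := nf_ge0 y.
have hcs := cabs_ge0 (f x y).
have hxe := CS x e; have hye := CS y e; rewrite he mulr1 in hxe hye.
rewrite /deltaf; case: ifP => [hne|/negbFE hz]; last first.
  rewrite mulr0 addr0.
  have h1 := cabs_ge0 (f x e); have h2 := cabs_ge0 (f y e).
  rewrite mulf_eq0 in hz; case/orP: hz => /eqP hz; rewrite hz in hxe hye *; nra.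
have hx : nf x != 0 by move: hne; rewrite mulf_eq0 negb_or => /andP[].
have hy : nf y != 0 by move: hne; rewrite mulf_eq0 negb_or => /andP[].
have hX0 : 0 < nf x by rewrite lt_def hx.
have hY0 : 0 < nf y by rewrite lt_def hy.
rewrite (dist_inf e hx) (dist_inf y hx).
set c := f y e.
set w := (2 * c) *: e - y.
have hfee := fee1 he.
have hw1 : 2 * f x e * c^* = f x w + f x y.
  rewrite /w fBr fZr rmorphM /= rmorph_nat; ring.
have hb1 : 2 * cabs (f x e) * cabs c <= cabs (f x w) + cabs (f x y).
  by rewrite -(cabsJ c) -cabs2 -!cabsM hw1 cabsD.
have hwn : nf w = nf y.
  rewrite /nf /w fB !fBr !fZ !fZr hfee [f e y]fC -/c rmorphM /= rmorph_nat.
  congr (Num.sqrt (complex.Re _)); ring.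
have hsum : proj x y + proj x w = (2 * c) *: proj x e.
  by rewrite -proj_add -proj_scale /w addrC subrK.
have hP : nf (proj x y + proj x w) = 2 * (cabs c * nf (proj x e)).
  by rewrite hsum nfZ cabsM cabs2 mulrA.
have tri1 := nf_tri (proj x y) (proj x w).
have tri2 : nf (proj x y) <= nf (proj x y + proj x w) + nf (proj x w).
  by rewrite -{1}(addrK (proj x w) (proj x y)); apply: nf_subtri.
rewrite hP in tri1 tri2.
have hD := proj_nf2 w hx.
rewrite hwn -cabsJ -fC in hD.
have hs := CS x w; rewrite hwn in hs.
set s := cabs (f x w) in hb1 hD hs.
set p := cabs c * nf (proj x e) in tri1 tri2 *.
set q := nf (proj x y) in tri1 tri2 *.
set d := nf (proj x w) in tri1 tri2 hD.
set X := nf x in hX hX0 hD hs *.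
set Y := nf y in hY hY0 hD hs *.
have hs0 : 0 <= s by exact: cabs_ge0.
have hd0 : 0 <= d by exact: nf_ge0.
have hsq : (2 * p - q) ^+ 2 <= d ^+ 2.
  have : `|2 * p - q| <= d by rewrite ler_norml; apply/andP; split; lra.
  move=> h; rewrite -real_normK ?num_real //.
  by rewrite (ler_pXn2r (_ : (0 < 2)%N)) ?nnegrE ?normr_ge0.
have key : X * (2 * p - q) ^+ 2 <= 2 * Y * (X * Y - s).
  have h1 : X ^+ 2 * (2 * p - q) ^+ 2 <= (X * Y - s) * (X * Y + s).
    have := ler_wpM2l (sqr_ge0 X) hsq. rewrite mulrC in hD. nra.
  have h2 : (X * Y - s) * (X * Y + s) <= (X * Y - s) * (2 * X * Y).
    apply: ler_wpM2l; nra.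
  have h3 : X * (X * (2 * p - q) ^+ 2) <= X * (2 * Y * (X * Y - s)).
    lra.
  by rewrite ler_pM2l in h3.
have hdl : X / Y * (p - 2^-1 * q) ^+ 2 = (X * (2 * p - q) ^+ 2) / (4 * Y).
  by field; rewrite gt_eqF.
rewrite hdl.
have : (X * (2 * p - q) ^+ 2) / (4 * Y) <= (X * Y - s) / 2.
  rewrite ler_pdivrMr ?mulr_gt0 //.
  have -> : (X * Y - s) / 2 * (4 * Y) = 2 * Y * (X * Y - s) by field.
  exact: key.
lra.
Qed.
End Form.

Section Main.
Variables (R : realType) (H : lmodType R[i]) (ip : H -> H -> R[i]).
Hypothesis hip : is_inner_product ip.
Variables (A S Sstar Ssharp : H -> H).
Hypothesis hA : bounded_op ip A.
Hypothesis hApos : positive_op ip A.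
Hypothesis hS : bounded_op ip S.
Hypothesis hSstar : is_adjoint ip S Sstar.
Hypothesis hSBA : in_BA ip A Sstar.
Hypothesis hSsharp : is_A_adjoint ip A Sstar Ssharp.
Local Notation CR := (real_complex R).
Local Notation iA := (ipA ip A).
Local Notation nA := (normA ip A).

Lemma ipL a x y z : ip (a *: x + y) z = a * ip x z + ip y z.
Proof. by case: hip. Qed.
Lemma ipC x y : ip y x = (ip x y)^*.
Proof. by case: hip. Qed.
Lemma ipP x : 0 <= ip x x.
Proof. by case: hip. Qed.

Lemma AL a x y : A (a *: x + y) = a *: A x + A y.
Proof. by case: hA. Qed.
Lemma A0 : A 0 = 0.
Proof.
have h := AL 1 0 0; rewrite !scale1r addr0 in h.
by apply: (addrI (A 0)); rewrite addr0 -h.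
Qed.
Lemma AD x y : A (x + y) = A x + A y.
Proof. by have := AL 1 x y; rewrite !scale1r. Qed.
Lemma AZ a x : A (a *: x) = a *: A x.
Proof. by have := AL a x 0; rewrite !addr0 A0 addr0. Qed.

Lemma Aherm x y : ip (A x) y = ip x (A y).
Proof.
pose B u v := ip (A u) v.
have Br : forall u, (B u u)^* = B u u by move=> u; rewrite geC0_conj //; exact: hApos.
have BD : forall u v w, B (u + v) w = B u w + B v w.
  by move=> u v w; rewrite /B AD (fD ipL).
have BDr : forall u v w, B u (v + w) = B u v + B u w.
  by move=> u v w; rewrite /B (fDr ipL ipC).
have BZ : forall a u w, B (a *: u) w = a * B u w.
  by move=> a u w; rewrite /B AZ (fZ ipL).
have BZr : forall a u w, B u (a *: w) = a^* * B u w.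
  by move=> a u w; rewrite /B (fZr ipL ipC).
have e1 := Br (x + y); rewrite !BD !BDr !rmorphD /= !Br in e1.
have e2 := Br (x + 'i%C *: y); rewrite !BD !BDr !BZ !BZr !rmorphD !rmorphM /= !Br in e2.
rewrite !conjCK !conj_i in e2.
set p := B x y in e1 e2; set q := B y x in e1 e2.
move/eqP: e1; rewrite -subr_eq0 => /eqP e1.
move/eqP: e2; rewrite -subr_eq0 => /eqP e2.
have g1 : (p^* + q^*) - (p + q) = 0 by rewrite -e1; ring.
have g2 : 'i%C * ((p^* - q^*) - (q - p)) = 0 by rewrite -e2; ring.
move/eqP: g2; rewrite mulf_eq0 (negbTE (i_neq0 R)) /= => /eqP g2.
have hq : q = p^*.
  have h2 : 2 * q - 2 * p^* = 0.
    have -> : 2 * q - 2 * p^* = - ((p^* + q^*) - (p + q)) - ((p^* - q^*) - (q - p)) by ring.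
    by rewrite g1 g2; ring.
  move/eqP: h2; rewrite -mulrBr mulf_eq0 pnatr_eq0 /= subr_eq0 => /eqP //.
have hq' : p = q^* by rewrite hq conjCK.
change (p = ip x (A y)); rewrite hq' /q /B.
by rewrite (ipC (A y) x).
Qed.

Lemma iAL a x y z : iA (a *: x + y) z = a * iA x z + iA y z.
Proof. by rewrite /ipA AL ipL. Qed.
Lemma iAC x y : iA y x = (iA x y)^*.
Proof. by rewrite /ipA Aherm ipC. Qed.
Lemma iAP x : 0 <= iA x x.
Proof. exact: hApos. Qed.

Lemma nA_ge0 x : 0 <= nA x. Proof. exact: sqrtr_ge0. Qed.
Lemma CSA x y : cabs (iA x y) <= nA x * nA y.
Proof. exact: (CS iAL iAC iAP). Qed.
Lemma iAvv x : iA x x = CR (nA x ^+ 2).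
Proof. exact: (fvv iAP). Qed.
Lemma nA_tri x y : nA (x + y) <= nA x + nA y.
Proof. exact: (nf_tri iAL iAC iAP). Qed.
Lemma iAD x y z : iA (x + y) z = iA x z + iA y z.
Proof. exact: (fD iAL). Qed.
Lemma ReiA x : complex.Re (iA x x) = nA x ^+ 2.
Proof. by rewrite iAvv. Qed.
Lemma buzA x y e : nA e = 1 ->
  2 * cabs (iA x e) * cabs (iA y e) + 2 * deltaA ip A y x e <= cabs (iA x y) + nA x * nA y.
Proof. exact: (buzano iAL iAC iAP). Qed.
Lemma deltaA_ge0 a b c : 0 <= deltaA ip A a b c.
Proof. exact: (deltaf_ge0 iA). Qed.

Lemma adjS v w : iA (S v) w = iA v (Ssharp w).
Proof.
rewrite /ipA Aherm hSstar.
by have [<- _] := hSsharp w; rewrite Aherm.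
Qed.
Lemma adjS' v w : iA (Ssharp v) w = iA v (S w).
Proof. by rewrite iAC -adjS -iAC. Qed.

Lemma hn_ge0 x : 0 <= hnorm ip x. Proof. exact: sqrtr_ge0. Qed.
Lemma CSip x y : cabs (ip x y) <= hnorm ip x * hnorm ip y.
Proof. exact: (CS ipL ipC ipP). Qed.

Lemma Re_le_cabs (c : R[i]) : complex.Re c <= cabs c.
Proof. exact: (le_trans (ler_norm _) (cabs_Re c)). Qed.

Lemma bern (r : R) (k : nat) : 1 <= r -> 1 + k%:R * (r - 1) <= r ^+ k.
Proof.
move=> hr; elim: k => [|k IH]; first by rewrite mul0r addr0 expr0.
rewrite exprS -natr1.
have h0 : 0 <= k%:R :> R by exact: ler0n.
have h1 : r * (1 + k%:R * (r - 1)) <= r * r ^+ k by rewrite ler_wpM2l // (le_trans ler01 hr).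
have h2 : 0 <= k%:R * (r - 1) ^+ 2 by rewrite mulr_ge0 // sqr_ge0.
lra.
Qed.

Lemma Sbound : exists K, 0 <= K /\ forall v, nA (S v) <= K * nA v.
Proof.
case: hSBA => Rop [[_ [Mr hMr]] hRA].
case: hS => _ [Ms hMs].
case: hA => _ [Ma hMa].
have adjR : forall v w, iA v (Rop w) = iA (S v) w.
  by move=> v w; rewrite /ipA Aherm hRA -hSstar -Aherm.
pose W v := Rop (S v).
have Wsa : forall v w, iA (W v) w = iA v (W w).
  by move=> v w; rewrite /W iAC adjR -iAC adjR.
pose M := `|Mr| * `|Ms| + 1.
have hM0 : 0 < M by rewrite /M ltr_pwDr // mulr_ge0.
have hWb : forall v, hnorm ip (W v) <= M * hnorm ip v.
  move=> v; have h1 := hMr (S v); have h2 := hMs v.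
  have h3 := hn_ge0 v; have h4 := hn_ge0 (S v).
  have h5 : Mr <= `|Mr| := ler_norm Mr. have h6 : Ms <= `|Ms| := ler_norm Ms.
  have h7 := normr_ge0 Mr; have h8 := normr_ge0 Ms.
  have a1 := ler_wpM2r h4 h5.
  have a2 := le_trans h2 (ler_wpM2r h3 h6).
  have a3 := ler_wpM2l h7 a2.
  rewrite /W /M; lra.
have hAb : forall v, nA v ^+ 2 <= `|Ma| * hnorm ip v ^+ 2.
  move=> v; rewrite -ReiA.
  apply: (le_trans (Re_le_cabs _)); rewrite /ipA.
  apply: (le_trans (CSip _ _)).
  have h1 := hMa v; have h2 := hn_ge0 v; have h3 := hn_ge0 (A v).
  have h5 : Ma <= `|Ma| := ler_norm Ma.
  nra.
pose b v k := nA (iter k W v).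
have hb0 : forall v k, 0 <= b v k by move=> v k; exact: nA_ge0.
have hlc : forall v k, b v k.+1 ^+ 2 <= b v k * b v k.+2.
  move=> v k; rewrite /b !iterS -ReiA Wsa.
  exact: (le_trans (Re_le_cabs _) (CSA _ _)).
have hbup : forall v k, b v k ^+ 2 <= `|Ma| * (M ^+ k * hnorm ip v) ^+ 2.
  move=> v k; apply: (le_trans (hAb _)); apply: ler_wpM2l => //.
  apply: sq_mono; first exact: hn_ge0.
  elim: k => [|k IH]; first by rewrite expr0 mul1r.
  rewrite iterS exprS -mulrA; apply: (le_trans (hWb _)).
  by rewrite ler_pM2l.
have key : forall v, b v 1 <= M * b v 0.
  move=> v; rewrite leNgt; apply/negP => hlt.
  have h1 := hlc v 0.
  have hb00 := hb0 v 0; have hb01 := hb0 v 1; have hb02 := hb0 v 2.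
  have hpos : 0 < b v 0.
    rewrite lt_def hb00 andbT; apply/eqP => h0.
    rewrite h0 mul0r mulr0 in h1 hlt; nra.
  pose q := b v 1 / b v 0.
  have hq : M < q by rewrite /q ltr_pdivlMr.
  have hq1 : q * b v 0 = b v 1 by rewrite /q divfK // gt_eqF.
  have step : forall k, q * b v k <= b v k.+1 /\ 0 < b v k.
    elim=> [|k [IH1 IH2]]; first by rewrite hq1.
    have hk1 : 0 < b v k.+1 by nra.
    split=> //.
    have := hlc v k; have := hb0 v k.+2.
    move=> hh1 hh2.
    have : b v k * (q * b v k.+1) <= b v k * b v k.+2 by nra.
    by rewrite ler_pM2l.
  have low : forall k, q ^+ k * b v 0 <= b v k.
    elim=> [|k IH]; first by rewrite expr0 mul1r.
    have [s1 s2] := step k.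
    rewrite exprSr -mulrA. apply: (le_trans _ s1).
    rewrite mulrCA; apply: ler_wpM2l => //; exact: ltW (lt_trans hM0 hq).
  pose r := (q / M) ^+ 2.
  have hr1 : 1 < r.
    rewrite /r expr_gt1 ?ltr_pdivlMr ?mul1r //; last by rewrite divr_ge0 // ltW // (lt_trans hM0).
  pose C := `|Ma| * hnorm ip v ^+ 2 / b v 0 ^+ 2.
  have hC : forall k, r ^+ k <= C.
    move=> k; have h2 := hbup v k; have h3 := low k.
    have h4 : (q ^+ k * b v 0) ^+ 2 <= `|Ma| * (M ^+ k * hnorm ip v) ^+ 2.
      apply: le_trans h2; apply: sq_mono => //.
      by rewrite mulr_ge0 ?exprn_ge0 ?hb0 // ltW // (lt_trans hM0).
    have hMk : 0 < (M ^+ k) ^+ 2 by rewrite !exprn_gt0.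
    have hb2 : 0 < b v 0 ^+ 2 by rewrite exprn_gt0.
    have er : r ^+ k = (q ^+ k) ^+ 2 / (M ^+ k) ^+ 2.
      by rewrite /r -exprM mulnC exprM !expr_div_n.
    rewrite er /C ler_pdivrMr // mulrAC ler_pdivlMr //.
    move: h4; rewrite !exprMn; lra.
  have hC0 : 0 <= C / (r - 1).
    apply: divr_ge0; last by rewrite subr_ge0 ltW.
    rewrite /C; apply: divr_ge0; last exact: sqr_ge0.
    by apply: mulr_ge0; [exact: normr_ge0 | exact: sqr_ge0].
  have hk := archi_boundP hC0.
  set k := Num.Def.archi_bound _ in hk.
  have hb := bern k (ltW hr1).
  have := hC k.
  rewrite ltr_pdivrMr ?subr_gt0 // in hk.
  lra.
exists (Num.sqrt M); split; first exact: sqrtr_ge0.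
move=> v.
apply: sq_le; rewrite ?mulr_ge0 ?sqrtr_ge0 ?nA_ge0 //.
rewrite exprMn (sqr_sqrtr (ltW hM0)) -ReiA -adjR.
apply: (le_trans (Re_le_cabs _)); apply: (le_trans (CSA _ _)).
have := key v; rewrite /b /= => hk.
have := nA_ge0 v. nra.
Qed.


Lemma Sshbound K : 0 <= K -> (forall v, nA (S v) <= K * nA v) ->
  forall v, nA (Ssharp v) <= K * nA v.
Proof.
move=> hK hSK v.
have h1 : nA (Ssharp v) ^+ 2 <= nA v * (K * nA (Ssharp v)).
  rewrite -ReiA adjS'.
  apply: (le_trans (Re_le_cabs _)); apply: (le_trans (CSA _ _)).
  by apply: ler_wpM2l; [exact: nA_ge0 | exact: hSK].
have h2 := nA_ge0 v; have h3 := nA_ge0 (Ssharp v).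
have [h0|hp] := eqVneq (nA (Ssharp v)) 0.
  by rewrite h0 mulr_ge0.
have hp' : 0 < nA (Ssharp v) by rewrite lt_def hp h3.
rewrite -(ler_pM2r hp') -expr2; lra.
Qed.

Lemma pointwise z : nA z = 1 ->
  cabs (iA (S z) z) ^+ 2 + nA (S z) ^+ 4 <=
  cabs (iA (Ssharp (S z) + S z) z) ^+ 2 + cabs (iA (Ssharp (S (S z))) z)
  + 2^-1 * nA (Ssharp (S (Ssharp (S z))) + Ssharp (S z))
  - 2 * deltaA ip A (Ssharp (S z)) (S z) z.
Proof.
move=> hz.
set x := S z; set y := Ssharp x.
have hyz : iA y z = CR (nA x ^+ 2) by rewrite /y adjS' iAvv.
have he1 : iA (y + x) z = CR (nA x ^+ 2) + iA x z by rewrite iAD hyz.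
have he2 : iA (Ssharp (S x)) z = iA x y by rewrite adjS' /y -adjS.
have he3 : iA (Ssharp (S y) + y) z = CR (nA y ^+ 2 + nA x ^+ 2).
  by rewrite iAD adjS' adjS -/y iAvv hyz rmorphD.
have hb := buzA x y hz.
rewrite hyz cabsR ger0_norm ?sqr_ge0 // in hb.
have hc3 := CSA (Ssharp (S y) + y) z; rewrite hz mulr1 he3 cabsR ger0_norm in hc3; last first.
  by rewrite addr_ge0 ?sqr_ge0.
rewrite he1 he2.
set a := complex.Re (iA x z); set b := complex.Im (iA x z).
have hca : cabs (iA x z) ^+ 2 = a ^+ 2 + b ^+ 2 by exact: cabs_sqRI.
have hce : cabs (CR (nA x ^+ 2) + iA x z) ^+ 2 = (nA x ^+ 2 + a) ^+ 2 + b ^+ 2.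
  by rewrite cabs_sqRI ReD ImD /= add0r.
rewrite hce hca.
have hRe : `|a| <= cabs (iA x z) := cabs_Re _.
have hn : - a <= `|a| by rewrite -normrN ler_norm.
have hX := nA_ge0 x; have hY := nA_ge0 y.
have hd := deltaA_ge0 y x z.
have h1 : 2 * nA x * nA y <= nA x ^+ 2 + nA y ^+ 2 by have := sqr_ge0 (nA x - nA y); lra.
have h2 : 0 <= nA x ^+ 2 * (a + cabs (iA x z)) by rewrite mulr_ge0 ?sqr_ge0 //; lra.
set ca := cabs (iA x z) in hb hRe h2 *.
set X := nA x in hb h1 h2 hX hc3 *.
set Y := nA y in hb h1 hY hc3 *.
have -> : X ^+ 4 = (X ^+ 2) ^+ 2 by rewrite -exprM.
lra.
Qed.


Lemma sup_ge (T : Type) (D : set T) (g : T -> R) (B : R) z :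
  (forall z, D z -> g z <= B) -> D z -> g z <= sup [set g z | z in D].
Proof.
move=> hB hz; apply: ub_le_sup; last by exists z.
by exists B => r [w hw <-]; exact: hB.
Qed.

Lemma inf_le (T : Type) (D : set T) (g : T -> R) z :
  (forall z, D z -> 0 <= g z) -> D z -> inf [set g z | z in D] <= g z.
Proof.
move=> h0 hz; apply: ge_inf; last by exists z.
by exists 0 => r [w hw <-]; exact: h0.
Qed.

Lemma sup_le (T : Type) (D : set T) (g : T -> R) (B : R) z :
  D z -> (forall z, D z -> g z <= B) -> sup [set g z | z in D] <= B.
Proof.
move=> hz hB; apply: ge_sup; first by exists (g z), z.
by move=> r [w hw <-]; exact: hB.
Qed.

Lemma main_ineq :
  domegaA ip A S ^+ 2 <=
    omegaA ip A (fun z => Ssharp (S z) + S z) ^+ 2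
    + omegaA ip A (fun z => Ssharp (S (S z)))
    + 2^-1 * opnormA ip A
        (fun z => Ssharp (S (Ssharp (S z))) + Ssharp (S z))
    - 2 * inf [set deltaA ip A (Ssharp (S z)) (S z) z | z in unitA ip A].
Proof.
have [K [hK hSK]] := Sbound.
have hShK := Sshbound hK hSK.
have [[z0 hz0]|hne] := pselect (exists z, unitA ip A z); last first.
  have e : unitA ip A = set0.
    by apply/seteqP; split => z // hz; exfalso; apply: hne; exists z.
  rewrite /domegaA /omegaA /opnormA e !image_set0 sup0 inf0 expr0n /=; lra.
set s1 := omegaA ip A _.
set s2 := omegaA ip A _.
set s3 := opnormA ip A _.
set i4 := inf _.
have bnds : forall z, unitA ip A z ->
  [/\ nA (S z) <= K, nA (Ssharp (S z)) <= K * K, nA (Ssharp (S (S z))) <= K * (K * K)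
    & nA (Ssharp (S (Ssharp (S z)))) <= K * (K * (K * K))].
  move=> z hz; rewrite /unitA /= in hz.
  have f1 : nA (S z) <= K by rewrite -[K]mulr1 -hz hSK.
  have f2 : nA (Ssharp (S z)) <= K * K := le_trans (hShK _) (ler_wpM2l hK f1).
  have f3 : nA (S (S z)) <= K * K := le_trans (hSK _) (ler_wpM2l hK f1).
  have f4 : nA (Ssharp (S (S z))) <= K * (K * K) := le_trans (hShK _) (ler_wpM2l hK f3).
  have f5 : nA (S (Ssharp (S z))) <= K * (K * K) := le_trans (hSK _) (ler_wpM2l hK f2).
  have f6 : nA (Ssharp (S (Ssharp (S z)))) <= K * (K * (K * K)) :=
    le_trans (hShK _) (ler_wpM2l hK f5).
  by split.
have hs1 : forall z, unitA ip A z -> cabs (iA (Ssharp (S z) + S z) z) <= s1.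
  move=> z hz; rewrite /s1 /omegaA.
  apply: (sup_ge (g := fun z => cabs (iA (Ssharp (S z) + S z) z)) (B := K * K + K)) => // w hw.
  have [g1 g2 _ _] := bnds w hw; rewrite /unitA /= in hw.
  apply: (le_trans (CSA _ _)); rewrite hw mulr1.
  apply: (le_trans (nA_tri _ _)); lra.
have hs2 : forall z, unitA ip A z -> cabs (iA (Ssharp (S (S z))) z) <= s2.
  move=> z hz; rewrite /s2 /omegaA.
  apply: (sup_ge (g := fun z => cabs (iA (Ssharp (S (S z))) z)) (B := K * (K * K))) => // w hw.
  have [_ _ g3 _] := bnds w hw; rewrite /unitA /= in hw.
  by apply: (le_trans (CSA _ _)); rewrite hw mulr1.
have hs3 : forall z, unitA ip A z ->
    nA (Ssharp (S (Ssharp (S z))) + Ssharp (S z)) <= s3.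
  move=> z hz; rewrite /s3 /opnormA.
  apply: (sup_ge (g := fun z => nA (Ssharp (S (Ssharp (S z))) + Ssharp (S z)))
     (B := K * (K * (K * K)) + K * K)) => // w hw.
  have [_ g2 _ g4] := bnds w hw.
  apply: (le_trans (nA_tri _ _)); lra.
have hi4 : forall z, unitA ip A z -> i4 <= deltaA ip A (Ssharp (S z)) (S z) z.
  move=> z hz; rewrite /i4.
  apply: (inf_le (g := fun z => deltaA ip A (Ssharp (S z)) (S z) z)) => // w _.
  exact: deltaA_ge0.
set RHS := s1 ^+ 2 + s2 + 2^-1 * s3 - 2 * i4.
pose g0 z := Num.sqrt (cabs (iA (S z) z) ^+ 2 + nA (S z) ^+ 4).
have hg : forall z, unitA ip A z -> g0 z ^+ 2 <= RHS.
  move=> z hz.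
  have hp := pointwise hz.
  rewrite /g0 sqr_sqrtr; last by rewrite addr_ge0 ?sqr_ge0 // exprn_ge0 // nA_ge0.
  apply: (le_trans hp).
  have e1 := sq_mono (cabs_ge0 _) (hs1 z hz).
  have := hs2 z hz; have := hs3 z hz; have := hi4 z hz.
  rewrite /RHS; lra.
have hR0 : 0 <= RHS by apply: le_trans (hg z0 hz0); exact: sqr_ge0.
have hgs : forall z, unitA ip A z -> g0 z <= Num.sqrt RHS.
  move=> z hz; apply: sq_le; rewrite ?sqrtr_ge0 // (sqr_sqrtr hR0); exact: hg.
have hsup : domegaA ip A S <= Num.sqrt RHS.
  by rewrite /domegaA; apply: (sup_le (g := g0)) hz0 hgs.
have hsup0 : 0 <= domegaA ip A S.
  apply: (le_trans (sqrtr_ge0 (cabs (iA (S z0) z0) ^+ 2 + nA (S z0) ^+ 4))).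
  by rewrite /domegaA; apply: (sup_ge (g := g0)) hgs hz0.
have := sq_mono hsup0 hsup; rewrite sqr_sqrtr //.
Qed.

End Main.

Theorem theorem2p6 (R : realType) (H : lmodType R[i]) (ip : H -> H -> R[i])
  (hH : is_hilbert ip) (A S Sstar Ssharp : H -> H)
  (hA : bounded_op ip A) (hApos : positive_op ip A)
  (hS : bounded_op ip S) (hSstar : is_adjoint ip S Sstar)
  (hSBA : in_BA ip A Sstar) (hSsharp : is_A_adjoint ip A Sstar Ssharp) :
  domegaA ip A S ^+ 2 <=
    omegaA ip A (fun z => Ssharp (S z) + S z) ^+ 2
    + omegaA ip A (fun z => Ssharp (S (S z)))
    + 2^-1 * opnormA ip A
        (fun z => Ssharp (S (Ssharp (S z))) + Ssharp (S z))
    - 2 * inf [set deltaA ip A (Ssharp (S z)) (S z) z | z in unitA ip A].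
Proof.
case: hH => hip _.
exact: (main_ineq hip hA hApos hS hSstar hSBA hSsharp).
Qed.
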